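(* Let $\omega\in\{0,\infty\}$ and let $f,g:(0,\infty)\to(0,\infty)$ be such that (1) $f$ is nondecreasing; (2) $g$ is $\rho$-regularly varying at $\omega$ for some $\rho>0$, i.e. $\lim_{t\to\omega}g(tx)/g(t)=x^\rho$ for all $x>0$; (3) $\lim_{x\to\omega}f(x)/g(x)=\alpha\in[0,\infty)$. If $M_n\to\omega$ and $u_n\to u\in[0,\infty)$ (with $M_n,u_n>0$), then $\lim_{n\to\infty}f(M_nu_n)/g(M_n)=\alpha u^\rho$. *)

(* Defs.v *)
From Stdlib Require Import Reals.
From Coquelicot Require Import Coquelicot.
Open Scope R_scope.

Inductive Omega := OmZero | OmInfty.

(* The filter "t -> omega" for t ranging in (0, +oo):
   right neighbourhoods of 0, resp. neighbourhoods of +oo. *)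
Definition om_filter (w : Omega) : (R -> Prop) -> Prop :=
  match w with
  | OmZero => at_right 0
  | OmInfty => Rbar_locally p_infty
  end.

Global Instance om_filter_proper (w : Omega) : ProperFilter (om_filter w).
Proof.
  destruct w; simpl.
  - apply at_right_proper_filter.
  - apply Rbar_locally_filter.
Qed.

(* x^r for x >= 0 (with the convention 0^r = 0, relevant for r > 0);
   Stdlib's Rpower 0 r would be 1, which is wrong. *)
Definition rpow (x r : R) : R :=
  if Rlt_dec 0 x then Rpower x r else 0.

(* Main.v *)
Require Import Defs.
From Stdlib Require Import Reals.
From Stdlib Require Import Lra.
From Coquelicot Require Import Coquelicot.
Open Scope R_scope.

Lemma ball_R (x e y : R) : ball x e y <-> Rabs (y - x) < e.
Proof. reflexivity. Qed.

Lemma scale_lim (w : Omega) (c : R) : 0 < c ->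
  filterlim (fun t => t * c) (om_filter w) (om_filter w).
Proof.
  intros Hc P HP. destruct w; simpl in *.
  - destruct HP as [e He]. assert (He' : 0 < e / c) by (apply Rdiv_lt_0_compat; [apply cond_pos|lra]).
    exists (mkposreal _ He'). intros y Hy Hy0. apply He.
    + rewrite ball_R in *. simpl in Hy. rewrite Rminus_0_r in *.
      rewrite Rabs_pos_eq in * by nra. 
      apply (Rmult_lt_compat_r c) in Hy; [|lra]. field_simplify in Hy; lra.
    + nra.
  - destruct HP as [N HN]. exists (N / c). intros x Hx. apply HN.
    apply (Rmult_lt_compat_r c) in Hx; [|lra]. field_simplify in Hx; lra.
Qed.

Lemma sc_lim (w : Omega) (f g : R -> R) (rho alpha : R)
  (Hgpos : forall x, 0 < x -> 0 < g x)
  (Hreg : forall x, 0 < x ->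
     filterlim (fun t => g (t * x) / g t) (om_filter w) (locally (rpow x rho)))
  (Hfg : filterlim (fun x => f x / g x) (om_filter w) (locally alpha))
  (M : nat -> R) (HMpos : forall n, 0 < M n)
  (HM : filterlim M eventually (om_filter w)) (c : R) (Hc : 0 < c) :
  is_lim_seq (fun n => f (M n * c) / g (M n)) (alpha * Rpower c rho).
Proof.
  apply is_lim_seq_ext with (u := fun n => (f (M n * c) / g (M n * c)) * (g (M n * c) / g (M n))).
  - intros n. assert (0 < g (M n * c)) by (apply Hgpos; specialize (HMpos n); nra).
    assert (0 < g (M n)) by auto. field; lra.
  - apply is_lim_seq_mult'.
    + refine (filterlim_comp _ _ _ (fun n => M n * c) (fun x => f x / g x) eventually (om_filter w) (locally alpha) _ Hfg).
      exact (filterlim_comp _ _ _ M (fun t => t * c) eventually (om_filter w) (om_filter w) HM (scale_lim w c Hc)).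
    + assert (H := filterlim_comp _ _ _ M (fun t => g (t * c) / g t) eventually (om_filter w) _ HM (Hreg c Hc)).
      unfold rpow in H. destruct (Rlt_dec 0 c); [exact H | lra].
Qed.

Theorem lemmaB2 (w : Omega) (f g : R -> R) (rho alpha : R)
  (Hfpos : forall x, 0 < x -> 0 < f x)
  (Hgpos : forall x, 0 < x -> 0 < g x)
  (Hfmono : forall x y, 0 < x -> x <= y -> f x <= f y)
  (Hrho : 0 < rho)
  (Hreg : forall x, 0 < x ->
     filterlim (fun t => g (t * x) / g t) (om_filter w) (locally (rpow x rho)))
  (Halpha : 0 <= alpha)
  (Hfg : filterlim (fun x => f x / g x) (om_filter w) (locally alpha))
  (M u : nat -> R) (u0 : R)
  (HMpos : forall n, 0 < M n) (Hupos : forall n, 0 < u n)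
  (HM : filterlim M eventually (om_filter w))
  (Hu0 : 0 <= u0)
  (Hu : is_lim_seq u u0) :
  is_lim_seq (fun n => f (M n * u n) / g (M n)) (alpha * rpow u0 rho).
Proof.
  assert (Hs := sc_lim w f g rho alpha Hgpos Hreg Hfg M HMpos HM).
  assert (Hup : forall n c, 0 < c -> u n <= c -> f (M n * u n) / g (M n) <= f (M n * c) / g (M n)).
  { intros n c Hc H. unfold Rdiv. apply Rmult_le_compat_r.
    - left; apply Rinv_0_lt_compat; auto.
    - apply Hfmono. specialize (HMpos n); specialize (Hupos n); nra.
      specialize (HMpos n); nra. }
  assert (Hlo : forall n c, 0 < c -> c <= u n -> f (M n * c) / g (M n) <= f (M n * u n) / g (M n)).
  { intros n c Hc H. unfold Rdiv. apply Rmult_le_compat_r.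
    - left; apply Rinv_0_lt_compat; auto.
    - apply Hfmono. specialize (HMpos n); nra.
      specialize (HMpos n); nra. }
  assert (Hxpos : forall n, 0 < f (M n * u n) / g (M n)).
  { intros n. apply Rdiv_lt_0_compat; [apply Hfpos|apply Hgpos]; auto.
    specialize (HMpos n); specialize (Hupos n); nra. }
  apply is_lim_seq_spec in Hu.
  apply is_lim_seq_spec. intros eps. simpl.
  set (d := eps / (2 * (alpha + 1))).
  assert (Hd : 0 < d) by (unfold d; apply Rdiv_lt_0_compat; [apply cond_pos|lra]).
  assert (Hd2 : d * (alpha + 1) = eps / 2) by (unfold d; field; lra).
  assert (Hepos := cond_pos eps).
  destruct Hu0 as [Hu0|Hu0].
  - assert (Hr0 : rpow u0 rho = Rpower u0 rho) by (unfold rpow; destruct (Rlt_dec 0 u0); lra).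
    rewrite Hr0.
    assert (Hc : continuity_pt (fun x => Rpower x rho) u0).
    { apply derivable_continuous_pt. exists (rho * Rpower u0 (rho - 1)).
      apply derivable_pt_lim_power; auto. }
    apply continuity_pt_filterlim in Hc. rewrite filterlim_locally in Hc.
    destruct (Hc (mkposreal d Hd)) as [delta Hdelta].
    set (h := Rmin (delta / 2) (u0 / 2)).
    assert (Hh : 0 < h) by (unfold h; apply Rmin_pos; generalize (cond_pos delta); lra).
    assert (Hh1 : h <= delta / 2) by apply Rmin_l.
    assert (Hh2 : h <= u0 / 2) by apply Rmin_r.
    assert (Ha : 0 < u0 - h) by lra.
    assert (Hb : 0 < u0 + h) by lra.
    assert (HPa := Hdelta (u0 - h)). assert (HPb := Hdelta (u0 + h)).
    rewrite !ball_R in HPa, HPb. simpl in HPa, HPb.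
    replace (u0 - h - u0) with (- h) in HPa by ring.
    replace (u0 + h - u0) with h in HPb by ring.
    rewrite Rabs_Ropp, Rabs_pos_eq in HPa by lra.
    rewrite Rabs_pos_eq in HPb by lra.
    specialize (HPa ltac:(generalize (cond_pos delta); lra)).
    specialize (HPb ltac:(generalize (cond_pos delta); lra)).
    apply Rabs_def2 in HPa. apply Rabs_def2 in HPb.
    assert (Ea := proj2 (is_lim_seq_spec _ _) (Hs _ Ha) (pos_div_2 eps)).
    assert (Eb := proj2 (is_lim_seq_spec _ _) (Hs _ Hb) (pos_div_2 eps)).
    assert (Eu := Hu (mkposreal h Hh)).
    simpl in Ea, Eb, Eu.
    generalize (filter_and _ _ Ea (filter_and _ _ Eb Eu)).
    apply filter_imp. intros n [A [B U]].
    apply Rabs_def2 in A. apply Rabs_def2 in B. apply Rabs_def2 in U.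
    assert (X1 := Hup n (u0 + h) Hb ltac:(lra)).
    assert (X2 := Hlo n (u0 - h) Ha ltac:(lra)).
    apply Rabs_def1; nra.
  - subst u0.
    assert (Hr0 : rpow 0 rho = 0) by (unfold rpow; destruct (Rlt_dec 0 0); lra).
    rewrite Hr0, Rmult_0_r.
    set (b := Rpower d (/ rho)).
    assert (Hb : 0 < b) by (unfold b, Rpower; apply exp_pos).
    assert (HPb : Rpower b rho = d).
    { unfold b. rewrite Rpower_mult, Rinv_l by lra. apply Rpower_1; auto. }
    assert (Eb := proj2 (is_lim_seq_spec _ _) (Hs _ Hb) (pos_div_2 eps)).
    assert (Eu := Hu (mkposreal b Hb)).
    simpl in Eb, Eu. rewrite HPb in Eb.
    generalize (filter_and _ _ Eb Eu).
    apply filter_imp. intros n [B U].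
    apply Rabs_def2 in B. apply Rabs_def2 in U.
    assert (X1 := Hup n b Hb ltac:(lra)).
    specialize (Hxpos n).
    apply Rabs_def1; nra.
Qed.
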